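(* Let $J'\subseteq J$ be nonempty, $t_o\in[0,T-\sum_{j\in J'}p_j]$, and let $\alpha$, $c_1<\dots<c_m$, $M$ and $B_\alpha$ be as in the context. Let $1\le q<m$, $J_l=\{j\in J'\setminus\{\alpha\}:M(j)\le q\}$, $J_r=\{j\in J':M(j)>q\}$ and $s=t_o+\sum_{j\in J_l}p_j$. If $c_q\le s<c_{q+1}$ and $s\notin B_\alpha$, then there exists a partial potential schedule of $J'$ starting at $t_o$ in which all jobs of $J_l$ are processed before $\alpha$, job $\alpha$ starts at time $s$, and all jobs of $J_r$ are processed after $\alpha$.
   Context: $J$ is a finite set of jobs; job $j$ has processing time $p_j>0$ and weight $w_j>0$; $T=\sum_{j\in J}p_j$. For $J'\subseteq J$ and $t_o\ge0$, a partial schedule of $J'$ starting at $t_o$ is an ordering of $J'$ processed consecutively without idle time from time $t_o$; job $j$ has (absolute) start time $t_j$. For $t\ge 0$, $\varphi_j(t)=\frac{w_j}{p_j(p_j+t)}$. For jobs $i,j$ with $w_ip_j\neq w_jp_i$, $t^*_{ij}=\frac{w_jp_i^2-w_ip_j^2}{w_ip_j-w_jp_i}$ (the unique real $t$ with $\varphi_i(t)=\varphi_j(t)$). Dominance rule: for an interval $I\subseteq[0,\infty)$, the relation ''$i$ dominates $j$ on $I$'' is violated by a (partial) schedule if $j$ is processed before $i$ and both $t_j\in I$ and $t_i-p_j\in I$. The rule contains, for each pair of distinct jobs $i,j$ with $(p_i,w_i)\ne(p_j,w_j)$: (1) if $\varphi_i(t)\ge\varphi_j(t)$ for all $t\ge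 0$, ''$i$ dominates $j$ on $[0,\infty)$''; (2) otherwise, if $\varphi_j(t)\ge\varphi_i(t)$ for all $t\ge0$, ''$j$ dominates $i$ on $[0,\infty)$''; (3) otherwise, labelling the pair so that $\varphi_i(0)>\varphi_j(0)$, $t^*_{ij}>0$ is defined and the rule contains ''$i$ dominates $j$ on $[0,t^*_{ij})$'' and ''$j$ dominates $i$ on $[t^*_{ij},\infty)$''. A partial schedule of $J'$ is a partial potential schedule if it violates no relation of the rule between two jobs of $J'$. Banned set: for $i\in J$, $B_i$ is the union over all $j\in J\setminus\{i\}$ with $\varphi_i(0)>\varphi_j(0)$, $w_ip_j\ne w_jp_i$ and $t^*_{ij}\in(0,T)$ of the intervals $[t^*_{ij},t^*_{ij}+p_j)$. Subproblem data: $t_e=t_o+\sum_{j\in J'}p_j$; $\alpha\in J'$ maximizes $\varphi_i(t_o)$ over $i\in J'$, ties broken in favour of maximum $\varphi_i(t_e)$; for $j\in J'\setminus\{\alpha\}$ with $t^*_{\alpha j}$ defined, $c_{\alpha j}=t^*_{\alpha j}+p_j$; $C=\{c_{\alpha j}: j\in J'\setminus\{\alpha\},\ t^*_{\alpha j}\text{ defined},\ c_{\alpha j}\in(t_o,t_e)\}\cup\{t_o,t_e\}$ with distinct elements $t_o=c_1<\dots<c_m=t_e$; $M(\alpha)=1$, and for $j\neq\alpha$, $M(j)=r$ if $t^*_{\alpha j}$ is defined, $t^*_{\alpha j}\in(t_o,t_e)$ and $c_{\alpha j}=c_r$ for some $r\le m$, and $M(j)=|J'|+1$ otherwise. *)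

(* Defs.v *)
From HB Require Import structures.
From mathcomp Require Import all_boot all_order all_algebra.
Set Implicit Arguments. Unset Strict Implicit. Unset Printing Implicit Defensive.
Import Order.TTheory GRing.Theory Num.Theory.
Local Open Scope ring_scope.

Section Defs.
Variables (J : finType) (R : realFieldType) (p w : J -> R).

Definition phi (j : J) (t : R) : R := w j / (p j * (p j + t)).

Definition tstar_defined (i j : J) : bool := w i * p j != w j * p i.
Definition tstar (i j : J) : R :=
  (w j * p i ^+ 2 - w i * p j ^+ 2) / (w i * p j - w j * p i).

Definition phi_ge (i j : J) : Prop := forall t, 0 <= t -> phi j t <= phi i t.

(* For an ordered pair (i, j) the dominance rule contains at most one relation
   "i dominates j on I"; dom_int i j t holds iff the rule contains such a
   relation and t lies in its interval I. *)
Definition dom_int (i j : J) (t : R) : Prop :=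
  i != j /\ (p i, w i) != (p j, w j) /\
  ( (phi_ge i j /\ 0 <= t)
    \/ (~ phi_ge i j /\ ~ phi_ge j i /\
        ( (phi j 0 < phi i 0 /\ 0 <= t /\ t < tstar i j)
          \/ (phi i 0 < phi j 0 /\ tstar j i <= t)))).

Definition Ttot : R := \sum_(j : J) p j.

Definition schedule_of (J' : {set J}) (s : seq J) : Prop := perm_eq s (enum J').

Definition start (t0 : R) (s : seq J) (j : J) : R :=
  t0 + \sum_(x <- take (index j s) s) p x.

Definition violates (t0 : R) (s : seq J) (i j : J) : Prop :=
  (index j s < index i s)%N /\
  dom_int i j (start t0 s j) /\ dom_int i j (start t0 s i - p j).

Definition partial_potential (J' : {set J}) (t0 : R) (s : seq J) : Prop :=
  schedule_of J' s /\
  forall i j, i \in J' -> j \in J' -> ~ violates t0 s i j.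

Definition banned (i : J) (t : R) : Prop :=
  exists j, j != i /\ phi j 0 < phi i 0 /\ tstar_defined i j /\
    0 < tstar i j < Ttot /\ tstar i j <= t < tstar i j + p j.

Definition tend (J' : {set J}) (t0 : R) : R := t0 + \sum_(j in J') p j.

Definition is_alpha (J' : {set J}) (t0 : R) (a : J) : Prop :=
  a \in J' /\
  forall i, i \in J' ->
    phi i t0 <= phi a t0 /\
    (phi i t0 = phi a t0 -> phi i (tend J' t0) <= phi a (tend J' t0)).

Definition cpoints (J' : {set J}) (t0 : R) (a : J) : seq R :=
  sort <=%R (undup ([:: t0; tend J' t0] ++
    map (fun j => tstar a j + p j)
      (filter (fun j => (j != a) && tstar_defined a j &&
                        (t0 < tstar a j + p j < tend J' t0)) (enum J')))).

(* c_r, 1-indexed *)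
Definition cpt (J' : {set J}) (t0 : R) (a : J) (r : nat) : R :=
  nth 0 (cpoints J' t0 a) r.-1.

Definition Mfun (J' : {set J}) (t0 : R) (a : J) (j : J) : nat :=
  if j == a then 1%N
  else if tstar_defined a j && (t0 < tstar a j < tend J' t0) &&
          (tstar a j + p j \in cpoints J' t0 a)
       then (index (tstar a j + p j) (cpoints J' t0 a)).+1
       else #|J'|.+1.

Definition Jleft (J' : {set J}) (t0 : R) (a : J) (q : nat) : {set J} :=
  [set j in J' | (j != a) && (Mfun J' t0 a j <= q)%N].
Definition Jright (J' : {set J}) (t0 : R) (a : J) (q : nat) : {set J} :=
  [set j in J' | (q < Mfun J' t0 a j)%N].

End Defs.

(* Main.v *)
Require Import Defs.
From HB Require Import structures.
From mathcomp Require Import all_boot all_order all_algebra.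
From mathcomp Require Import ring lra zify.
Set Implicit Arguments. Unset Strict Implicit. Unset Printing Implicit Defensive.
Import Order.TTheory GRing.Theory Num.Theory.
Local Open Scope ring_scope.

Section Aux.
Variables (J : finType) (R : realFieldType) (p w : J -> R).
Hypothesis hp : forall j, 0 < p j.
Hypothesis hw : forall j, 0 < w j.

Definition rho (k : J) : R := p k / w k.
Definition LL (k : J) (t : R) : R := rho k * (p k + t).
Definition strict (i j : J) (t : R) : Prop :=
  LL i t < LL j t \/ (LL i t = LL j t /\ rho i < rho j).

Lemma rho_gt0 k : 0 < rho k.
Proof. by rewrite /rho divr_gt0. Qed.

Lemma LL_gt0 k t : 0 <= t -> 0 < LL k t.
Proof. move=> ht; rewrite /LL mulr_gt0 ?rho_gt0 //. have := hp k; lra. Qed.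

Lemma phi_inv k t : 0 <= t -> phi p w k t = (LL k t)^-1.
Proof.
move=> ht; rewrite /phi /LL /rho.
have h1 := hp k; have h2 := hw k.
have h3 : p k + t != 0 by rewrite gt_eqF //; lra.
field. by rewrite h3 gt_eqF ?gt_eqF.
Qed.

Lemma phi_le i j t : 0 <= t -> (phi p w j t <= phi p w i t) = (LL i t <= LL j t).
Proof.
move=> ht; rewrite !phi_inv // lef_pV2 // posrE LL_gt0 //.
Qed.

Lemma phi_lt i j t : 0 <= t -> (phi p w j t < phi p w i t) = (LL i t < LL j t).
Proof.
move=> ht; rewrite !phi_inv // ltf_pV2 // posrE LL_gt0 //.
Qed.

Lemma phi_eq i j t : 0 <= t -> (phi p w j t = phi p w i t) <-> (LL i t = LL j t).
Proof.
move=> ht; split=> h.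
  by apply/eqP; rewrite eq_le -!phi_le // h lexx.
by rewrite !phi_inv // h.
Qed.

Lemma rho_def i j : rho i != rho j -> tstar_defined p w i j.
Proof.
apply: contraNN => /eqP h; rewrite /rho.
have h1 := hw i; have h2 := hw j.
rewrite eqr_div; last 2 first.
- by rewrite gt_eqF.
- by rewrite gt_eqF.
apply/eqP; rewrite mulrC -h mulrC //.
Qed.

Lemma tstar_root i j : tstar_defined p w i j ->
  LL i (tstar p w i j) = LL j (tstar p w i j).
Proof.
rewrite /tstar_defined /LL /rho /tstar => hd.
have h1 := hw i; have h2 := hw j.
have hd' : w i * p j - w j * p i != 0 by rewrite subr_eq0.
field. by rewrite hd' !gt_eqF.
Qed.


Lemma LL_shift k t u : LL k t = LL k u + rho k * (t - u).
Proof. rewrite /LL; ring. Qed.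

Lemma ident i j t : rho i = rho j -> LL i t = LL j t -> (p i, w i) = (p j, w j).
Proof.
move=> hr hl.
have hpij : p i = p j.
  move: hl; rewrite /LL hr => /mulfI h.
  have /h : rho j != 0 by rewrite gt_eqF // rho_gt0.
  by move/addIr.
move: hr; rewrite /rho hpij => /eqP.
have h1 := hw i; have h2 := hw j; have h3 := hp j.
rewrite eqr_div; last 2 first.
- by rewrite gt_eqF.
- by rewrite gt_eqF.
move/eqP=> h; congr pair.
apply/(mulfI (x := p j)); first by rewrite gt_eqF.
by rewrite h.
Qed.

Lemma dom_strict i j t : dom_int p w i j t -> strict i j t.
Proof.
case=> [hij [hpw [[hge ht] | [hnij [hnji [[h0 [ht htt]] | [h0 htt]]]]]]].
- have g1 := hge t ht; rewrite phi_le // in g1.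
  have g2 := hge (t + 1); rewrite phi_le in g2; last by lra.
  rewrite /strict.
  case: (ltrP (LL i t) (LL j t)) => h; first by left.
  have he : LL i t = LL j t by lra.
  right; split => //.
  case: (ltrP (rho i) (rho j)) => // hr.
  have := LL_shift i (t + 1) t; have := LL_shift j (t + 1) t.
  have -> : t + 1 - t = 1 by ring.
  rewrite !mulr1 => e1 e2.
  have hre : rho i = rho j by lra.
  by move: hpw; rewrite (ident hre he) eqxx.
- rewrite phi_lt // in h0.
  have hr : rho j < rho i.
    case: (ltrP (rho j) (rho i)) => // hr.
    exfalso; apply: hnij => u hu; rewrite phi_le //.
    have := LL_shift i u 0; have := LL_shift j u 0; nra.
  have hd : tstar_defined p w i j by apply: rho_def; rewrite (gt_eqF hr).
  have hT := tstar_root hd.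
  have := LL_shift i t (tstar p w i j); have := LL_shift j t (tstar p w i j).
  rewrite /strict; left; nra.
- rewrite phi_lt // in h0.
  have hr : rho i < rho j.
    case: (ltrP (rho i) (rho j)) => // hr.
    exfalso; apply: hnji => u hu; rewrite phi_le //.
    have := LL_shift i u 0; have := LL_shift j u 0; nra.
  have hd : tstar_defined p w j i by apply: rho_def; rewrite (gt_eqF hr).
  have hT := tstar_root hd.
  have := LL_shift i t (tstar p w j i); have := LL_shift j t (tstar p w j i).
  move=> e1 e2; rewrite /strict.
  case: (ltrP (LL i t) (LL j t)) => h; first by left.
  right; split => //; nra.
Qed.

Lemma strict_irr i t : ~ strict i i t.
Proof. rewrite /strict; lra. Qed.

Lemma strict_trans a b c t : strict a b t -> strict b c t -> strict a c t.
Proof. rewrite /strict; lra. Qed.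

Lemma strict_dec i j t : strict i j t \/ ~ strict i j t.
Proof.
rewrite /strict.
case: (ltrP (LL i t) (LL j t)) => h1; first by left; left.
case: (ltrP (rho i) (rho j)) => h2; last by right; lra.
case: (eqVneq (LL i t) (LL j t)) => h3; first by left; right.
right; case=> [|[]]; first lra.
by move/eqP; rewrite (negbTE h3).
Qed.

Lemma exists_min (S : seq J) t : S != [::] ->
  exists m, m \in S /\ forall y, y \in S -> ~ strict y m t.
Proof.
elim: S => [//|x S IH] _.
case: (altP (S =P [::])) => [-> | hS].
  exists x; split; first by rewrite inE eqxx.
  by move=> y; rewrite inE => /eqP ->; apply: strict_irr.
have [m [hm hmin]] := IH hS.
case: (strict_dec x m t) => hxm.
  exists x; split; first by rewrite inE eqxx.
  move=> y; rewrite inE => /orP [/eqP -> | hy]; first by apply: strict_irr.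
  by move=> hyx; apply: (hmin y hy); apply: strict_trans hxm.
exists m; split; first by rewrite inE hm orbT.
by move=> y; rewrite inE => /orP [/eqP -> | hy] //; apply: hmin.
Qed.

Lemma start_cons t m s j : j != m ->
  start p t (m :: s) j = start p (t + p m) s j.
Proof.
move=> hjm; rewrite /start /= eq_sym (negbTE hjm) /= big_cons; ring.
Qed.

Lemma start_head t m s : start p t (m :: s) m = t.
Proof. by rewrite /start /= eqxx /= big_nil addr0. Qed.

Lemma greedy n : forall (S : seq J) t, size S = n ->
  exists sch, perm_eq sch S /\
    forall j i, j \in sch -> i \in sch -> (index j sch < index i sch)%N ->
      ~ strict i j (start p t sch j).
Proof.
elim: n => [|n IH] S t hS.
  exists [::]; split; first by rewrite (size0nil hS).
  by [].
have hS0 : S != [::] by apply/eqP => h; rewrite h in hS.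
have [m [hm hmin]] := exists_min t hS0.
have hsz : size (rem m S) = n by rewrite size_rem // hS.
have [sch' [hperm hprop]] := IH (rem m S) (t + p m) hsz.
have hP : perm_eq (m :: sch') S.
  rewrite perm_sym; apply: perm_trans (perm_to_rem hm) _.
  by rewrite perm_cons perm_sym.
exists (m :: sch'); split => //.
move=> j i hj hi; rewrite /= .
case: (eqVneq m j) => [<- | hmj].
  move=> _; rewrite start_head; apply: hmin.
  by rewrite -(perm_mem hP).
case: (eqVneq m i) => [<- // | hmi].
rewrite ltnS => hlt.
rewrite start_cons; last by rewrite eq_sym.
apply: hprop => //.
  by move: hj; rewrite inE eq_sym (negbTE hmj).
by move: hi; rewrite inE eq_sym (negbTE hmi).
Qed.

Lemma start_catl t (A B : seq J) x : x \in A -> start p t (A ++ B) x = start p t A x.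
Proof.
move=> hx; rewrite /start index_cat hx take_cat index_mem hx //.
Qed.

Lemma start_catr t (A B : seq J) x : x \notin A ->
  start p t (A ++ B) x = start p (t + \sum_(y <- A) p y) B x.
Proof.
move=> hx; rewrite /start index_cat (negbTE hx) take_cat.
rewrite ltnNge leq_addr /= addKn big_cat /=; ring.
Qed.

Lemma index_catr (A B : seq J) x : x \notin A -> index x (A ++ B) = (size A + index x B)%N.
Proof. by move=> hx; rewrite index_cat (negbTE hx). Qed.

Lemma index_catl (A B : seq J) x : x \in A -> index x (A ++ B) = index x A.
Proof. by move=> hx; rewrite index_cat hx. Qed.

Lemma sum_ge0 (A : seq J) : 0 <= \sum_(y <- A) p y.
Proof. by apply: sumr_ge0 => y _; apply: ltW. Qed.

Lemma start_ge t (A : seq J) x : t <= start p t A x.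
Proof. rewrite /start; have := sum_ge0 (take (index x A) A); lra. Qed.

Lemma start_le t (A : seq J) x : x \in A -> start p t A x + p x <= t + \sum_(y <- A) p y.
Proof.
move=> hx; rewrite /start.
have hi : (index x A < size A)%N by rewrite index_mem.
rewrite -{3}(cat_take_drop (index x A).+1 A) big_cat /=.
rewrite (take_nth x hi) nth_index // -cats1 big_cat big_seq1 /=.
have := sum_ge0 (drop (index x A).+1 A); lra.
Qed.

Lemma def_rho i j : tstar_defined p w i j -> rho i != rho j.
Proof.
apply: contraNN => /eqP; rewrite /rho.
have h1 := hw i; have h2 := hw j.
move/eqP; rewrite eqr_div; last 2 first.
- by rewrite gt_eqF.
- by rewrite gt_eqF.
move/eqP=> h; apply/eqP; lra.
Qed.

Section Cs.
Variables (J' : {set J}) (t0 : R) (a : J).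
Hypothesis ht0e : t0 <= tend p J' t0.

Lemma cs_sorted : sorted <=%R (cpoints p w J' t0 a).
Proof. by apply: sort_sorted; apply: le_total. Qed.

Lemma cs_mono i j : (i <= j)%N -> (j < size (cpoints p w J' t0 a))%N ->
  nth 0 (cpoints p w J' t0 a) i <= nth 0 (cpoints p w J' t0 a) j.
Proof.
move=> hij hj.
apply: (sorted_leq_nth le_trans lexx 0 cs_sorted) => //.
by rewrite inE; apply: leq_ltn_trans hj.
Qed.

Lemma cs_le_te x : x \in cpoints p w J' t0 a -> x <= tend p J' t0.
Proof.
rewrite /cpoints mem_sort mem_undup mem_cat => /orP [|].
  by rewrite !inE => /orP [/eqP -> | /eqP ->].
move=> /mapP [j]; rewrite mem_filter => /andP [/andP [_ /andP [_ h]] _] ->.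
exact: ltW.
Qed.

Lemma cs_in i : i \in J' -> i != a -> tstar_defined p w a i ->
  t0 < tstar p w a i + p i < tend p J' t0 ->
  tstar p w a i + p i \in cpoints p w J' t0 a.
Proof.
move=> hi hia hd hc.
rewrite /cpoints mem_sort mem_undup mem_cat; apply/orP; right.
apply/mapP; exists i => //.
by rewrite mem_filter hia hd hc mem_enum hi.
Qed.

Lemma cs_size : a \in J' -> (size (cpoints p w J' t0 a) <= #|J'|.+1)%N.
Proof.
move=> ha.
rewrite /cpoints size_sort.
apply: leq_trans (size_undup _) _.
rewrite size_cat size_map size_filter /=.
set P := (fun j => _).
have h1 : (count P (enum J') <= count (predC (pred1 a)) (enum J'))%N.
  apply: sub_count => j; rewrite /P /= => /andP [/andP [h _] _] //.
have h2 := count_predC (pred1 a) (enum J').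
have h3 : count (pred1 a) (enum J') = 1%N.
  by have := count_uniq_mem a (enum_uniq (mem J')); rewrite mem_enum ha.
rewrite -cardE in h2.
lia.
Qed.

End Cs.

Lemma LL_interp i j x u y : x <= u -> u <= y -> LL i x <= LL j x -> LL i y <= LL j y ->
  LL i u <= LL j u.
Proof.
move=> h1 h2 h3 h4.
have := LL_shift i u x; have := LL_shift j u x.
have := LL_shift i y x; have := LL_shift j y x.
move=> e1 e2 e3 e4.
case: (ltrP (rho i) (rho j)) => hr; nra.
Qed.

Lemma LL_past a j T u : rho j < rho a -> LL a T = LL j T -> T <= u ->
  LL j u <= LL a u /\ (T < u -> LL j u < LL a u).
Proof.
move=> hr hT hu.
have := LL_shift a u T; have := LL_shift j u T.
move=> e1 e2; split; first by nra.
by move=> hu'; nra.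
Qed.

Lemma main_aux (J' : {set J}) (t0 : R) (a : J) (q : nat) :
  J' != set0 ->
  0 <= t0 -> t0 <= Ttot p - \sum_(j in J') p j ->
  is_alpha p w J' t0 a ->
  (1 <= q)%N -> (q < size (cpoints p w J' t0 a))%N ->
  let s := t0 + \sum_(j in Jleft p w J' t0 a q) p j in
  cpt p w J' t0 a q <= s -> s < cpt p w J' t0 a q.+1 ->
  ~ banned p w a s ->
  exists sch : seq J,
    partial_potential p w J' t0 sch /\
    (forall j, j \in Jleft p w J' t0 a q -> (index j sch < index a sch)%N) /\
    start p t0 sch a = s /\
    (forall j, j \in Jright p w J' t0 a q -> (index a sch < index j sch)%N).
Proof.
move=> hJ0 ht0 hT [haJ hamax] hq1 hqm s hcq hcq1 hnb.
set cs := cpoints p w J' t0 a in hqm hcq hcq1.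
set te := tend p J' t0.
set Jl := Jleft p w J' t0 a q.
set Jr := Jright p w J' t0 a q.
have hpos : 0 < \sum_(j in J') p j.
  have [x hx] := set0Pn _ hJ0.
  rewrite (bigD1 x) //=.
  have := hp x.
  have : 0 <= \sum_(i in J' | i != x) p i by apply: sumr_ge0 => i _; apply: ltW.
  lra.
have htt : t0 < te by rewrite /te /tend; lra.
have hteT : te <= Ttot p by rewrite /te /tend; lra.
have hA1 : forall k, k \in J' -> LL a t0 <= LL k t0.
  by move=> k hk; rewrite -phi_le //; case: (hamax k hk).
have hA2 : forall k, k \in J' -> LL k t0 = LL a t0 -> LL a te <= LL k te.
  move=> k hk he; rewrite -phi_le; last by lra.
  case: (hamax k hk) => _; apply; exact/phi_eq.
have hcsle : forall x, x \in cs -> x <= te.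
  move=> x hx; have hh : t0 <= tend p J' t0 by rewrite -/te; lra.
  exact: (cs_le_te hh hx).
have hste : s < te.
  apply: (lt_le_trans hcq1); apply: hcsle; rewrite /cpt /=; exact: mem_nth.
have hs0 : t0 <= s.
  rewrite /s; have : 0 <= \sum_(j in Jl) p j by apply: sumr_ge0 => i _; apply: ltW.
  lra.
have hsize : (size cs <= #|J'|.+1)%N by apply: cs_size => //; rewrite -/te; lra.
have hJl : forall j, j \in Jl -> [/\ j \in J', j != a, rho j < rho a,
    tstar p w a j + p j <= s & LL a (tstar p w a j) = LL j (tstar p w a j)].
  move=> j; rewrite inE => /andP [hj /andP [hja hM]].
  move: hM; rewrite /Mfun (negbTE hja).
  case: ifP; last by move=> _ hM; exfalso; rewrite -/cs in hsize; clear -hsize hM hqm; lia.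
  move=> /andP [/andP [hd hT0] hc] hM.
  have hroot := tstar_root hd.
  have hle : tstar p w a j + p j <= s.
    apply: le_trans hcq; rewrite /cpt -/cs.
    rewrite -{1}(nth_index 0 hc).
    apply: cs_mono => //; rewrite /cs.
      by clear -hM; move: hM; case: q.
    exact: leq_ltn_trans (leq_pred q) hqm.
  split => //.
  have hr := def_rho hd.
  have := hA1 j hj.
  have := LL_shift a t0 (tstar p w a j); have := LL_shift j t0 (tstar p w a j).
  move: hT0 => /andP [hT0 _].
  move: hr; rewrite neq_lt => /orP [hr | hr] //.
  move=> e1 e2 h; exfalso; clear -e1 e2 h hr hT0 hroot; nra.
have hJr : forall i, i \in Jr -> ~ strict i a s.
  move=> i; rewrite inE => /andP [hi hM] H.
  have hr : rho i < rho a.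
    case: H => [H | [_ H]] //.
    have := hA1 i hi.
    have := LL_shift a s t0; have := LL_shift i s t0.
    case: (ltrP (rho i) (rho a)) => // hr' e1 e2 h; exfalso; clear -hr' e1 e2 h H hs0; nra.
  have hia : i != a by apply/eqP => hia; rewrite hia in hr; lra.
  have hd : tstar_defined p w a i by apply: rho_def; rewrite (gt_eqF hr).
  set T := tstar p w a i.
  have hroot : LL a T = LL i T := tstar_root hd.
  have hTs : T <= s.
    have := LL_shift a s T; have := LL_shift i s T.
    move: H; rewrite /strict => H e1 e2; clear -H e1 e2 hr hroot; nra.
  have hT0 : t0 <= T.
    have := hA1 i hi.
    have := LL_shift a t0 T; have := LL_shift i t0 T.
    move=> e1 e2 h; clear -e1 e2 h hr hroot; nra.
  have hT0' : t0 < T.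
    rewrite lt_neqAle hT0 andbT; apply/eqP => e.
    have := hA2 i hi.
    rewrite -e in hroot.
    have := LL_shift a te t0; have := LL_shift i te t0.
    move=> e1 e2 h; have := h (esym hroot); clear -e1 e2 hr hroot htt; nra.
  have hcs : s < T + p i.
    move: hM; rewrite /Mfun (negbTE hia) hd /= hT0' /=.
    have -> : T < te by lra.
    rewrite /= -/cs -/T.
    case: ifP => hc hM.
      apply: (lt_le_trans hcq1); rewrite /cpt /= -/cs.
      rewrite -(nth_index 0 hc); apply: cs_mono.
        by clear -hM; move: hM; rewrite /cs ltnS.
      by rewrite index_mem.
    case: (ltrP s (T + p i)) => // hsc; exfalso.
    have : T + p i \in cs.
      apply: cs_in => //.
      rewrite -/T -/te; have hpi := hp i; apply/andP; split; lra.
    by rewrite hc.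
  apply: hnb; exists i; split => //; split.
    rewrite phi_lt; last by lra.
    have := LL_shift a 0 T; have := LL_shift i 0 T.
    move=> e1 e2; clear -e1 e2 hr hroot hT0' ht0; nra.
  split => //; rewrite -/T; split; apply/andP; split; lra.

have hJr2 : forall i u, i \in Jr -> t0 <= u <= s -> LL a u <= LL i u.
  move=> i u hi /andP [hu1 hu2].
  have hi' : i \in J' by move: hi; rewrite inE => /andP [].
  have h1 := hA1 i hi'.
  have h2 : LL a s <= LL i s.
    case: (ltrP (LL i s) (LL a s)) => // h; exfalso; apply: (hJr i hi); by left.
  have := LL_shift a u t0; have := LL_shift i u t0.
  have := LL_shift a s t0; have := LL_shift i s t0.
  move=> e1 e2 e3 e4.
  case: (ltrP (rho i) (rho a)) => hr; clear -e1 e2 e3 e4 h1 h2 hr hu1 hu2; nra.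
have [sl [hpl hgl]] := @greedy _ (enum Jl) t0 (erefl _).
have [sr [hpr hgr]] := @greedy _ (enum Jr) (s + p a) (erefl _).
have hml : forall x, (x \in sl) = (x \in Jl) by move=> x; rewrite (perm_mem hpl) mem_enum.
have hmr : forall x, (x \in sr) = (x \in Jr) by move=> x; rewrite (perm_mem hpr) mem_enum.
have hsl : t0 + \sum_(y <- sl) p y = s by rewrite (perm_big _ hpl) big_enum.
have haJl : a \notin Jl by rewrite inE eqxx andbF.
have haJr : a \notin Jr by rewrite inE /Mfun eqxx ltnNge hq1 andbF.
have hdisj : forall x, x \in Jl -> x \notin Jr.
  move=> x; rewrite !inE => /andP [_ /andP [_ h]]; apply/negP => /andP [_ h'].
  by rewrite ltnNge h in h'.
have hcls : forall x, x \in J' -> [\/ x \in Jl, x = a | x \in Jr].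
  move=> x hx; case: (eqVneq x a) => [->|hxa]; first by constructor 2.
  case: (leqP (Mfun p w J' t0 a x) q) => h.
    by constructor 1; rewrite inE hx hxa h.
  by constructor 3; rewrite inE hx h.
have hsubl : forall x, x \in Jl -> x \in J' by move=> x; rewrite inE => /andP [].
have hsubr : forall x, x \in Jr -> x \in J' by move=> x; rewrite inE => /andP [].
set sch := sl ++ a :: sr.
have ha_sl : a \notin sl by rewrite hml.
have ha_sr : a \notin sr by rewrite hmr.
have hstart_a : start p t0 sch a = s by rewrite /sch start_catr // hsl start_head.
have hidx_a : index a sch = size sl by rewrite /sch index_catr //= eqxx addn0.
have hidx_l : forall x, x \in sl -> index x sch = index x sl.
  by move=> x hx; rewrite /sch index_catl.
have hxsr : forall x, x \in sr -> x \notin sl /\ x != a.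
  move=> x; rewrite hmr hml => hx; split; first by apply/negP => /hdisj; rewrite hx.
  by apply/eqP => e; move: haJr; rewrite -e hx.
have hidx_r : forall x, x \in sr -> index x sch = (size sl + (index x sr).+1)%N.
  move=> x hx; have [h1 h2] := hxsr x hx.
  have h3 : (a == x) = false by rewrite eq_sym (negbTE h2).
  by rewrite /sch index_catr //= h3.
have hst_l : forall x, x \in sl -> start p t0 sch x = start p t0 sl x.
  by move=> x hx; rewrite /sch start_catl.
have hst_r : forall x, x \in sr -> start p t0 sch x = start p (s + p a) sr x.
  move=> x hx; have [h1 h2] := hxsr x hx.
  by rewrite /sch start_catr // hsl start_cons.
exists sch; split; [split|].
- apply: uniq_perm; last first.
  + move=> x; rewrite mem_enum /sch mem_cat inE hml hmr.
    apply/idP/idP.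
      case/orP => [/hsubl // | /orP [/eqP -> // | /hsubr //]].
    by move=> /hcls [-> | -> | ->]; rewrite ?eqxx ?orbT.
  + exact: enum_uniq.
  + rewrite /sch cat_uniq /= ha_sr (perm_uniq hpr) (perm_uniq hpl) !enum_uniq /= andbT.
    rewrite negb_or ha_sl /=; apply/hasPn => x hx; have [h1 _] := hxsr x hx; exact: h1.
- move=> i j hi hj [hij [d1 d2]].
  have hd1 := dom_strict d1; have hd2 := dom_strict d2.
  case: (hcls j hj) => [hjl | hja | hjr]; case: (hcls i hi) => [hil | hia | hir]; try subst j; try subst i.
  + have hjl' : j \in sl by rewrite hml.
    have hil' : i \in sl by rewrite hml.
    rewrite !hidx_l // in hij; rewrite hst_l // in hd1.
    exact: (hgl j i hjl' hil' hij hd1).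
  + rewrite hstart_a in hd2.
    have [_ _ hr hle hroot] := hJl j hjl.
    have [h1 _] := LL_past (u := s - p j) hr hroot ltac:(lra).
    move: hd2; rewrite /strict; lra.
  + set tj := start p t0 sch j in hd1 hd2.
    have hjl' : j \in sl by rewrite hml.
    have hir' : i \in sr by rewrite hmr.
    have htj1 : t0 <= tj by rewrite /tj hst_l //; apply: start_ge.
    have htj2 : tj + p j <= s by rewrite /tj hst_l // -hsl; apply: start_le.
    have hti : s + p a <= start p t0 sch i.
      by rewrite hst_r //; apply: start_ge.
    have hpa := hp a.
    have hpj := hp j.
    have [_ _ hr hle hroot] := hJl j hjl.
    have e1 : LL i tj <= LL j tj by move: hd1; rewrite /strict; lra.
    have e2 : LL i (start p t0 sch i - p j) <= LL j (start p t0 sch i - p j).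
      by move: hd2; rewrite /strict; lra.
    set y := start p t0 sch i - p j in e2.
    have [u [hu1 hu2 hu3 hu4]] : exists u, [/\ tj <= u, u <= y, t0 <= u <= s & tstar p w a j < u].
      case: (lerP y s) => hys.
        exists y; split => //; last by rewrite /y in hys *; lra.
        by rewrite /y in hys *; lra.
        by apply/andP; split; rewrite /y in hys *; lra.
      exists s; split; rewrite ?lexx ?hs0 //; try lra.
    have f1 := LL_interp hu1 hu2 e1 e2.
    have [_ f2] := LL_past (u := u) hr hroot ltac:(lra).
    have f3 := hJr2 i u hir hu3.
    have := f2 hu4; lra.
  + have hil' : i \in sl by rewrite hml.
    by rewrite hidx_a hidx_l // ltnNge ltnW // index_mem in hij.
  + by rewrite ltnn in hij.
  + rewrite hstart_a in hd1; exact: (hJr i hir hd1).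
  + have hil' : i \in sl by rewrite hml.
    have hjr' : j \in sr by rewrite hmr.
    rewrite (hidx_l i) // (hidx_r j) // in hij.
    have := index_mem i sl; rewrite hil' => h.
    by move: hij h; clear; lia.
  + have hjr' : j \in sr by rewrite hmr.
    rewrite hidx_a hidx_r // in hij.
    by move: hij; clear; lia.
  + have hjr' : j \in sr by rewrite hmr.
    have hir' : i \in sr by rewrite hmr.
    rewrite !hidx_r // ltn_add2l ltnS in hij; rewrite hst_r // in hd1.
    exact: (hgr j i hjr' hir' hij hd1).
- split.
    move=> x hx; have hx' : x \in sl by rewrite hml.
    by rewrite hidx_a hidx_l // index_mem.
  split => //.
  move=> x hx; have hx' : x \in sr by rewrite hmr.
  by rewrite hidx_a hidx_r //; clear; lia.
Qed.


End Aux.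

Theorem lemma8 (J : finType) (R : realFieldType) (p w : J -> R)
    (J' : {set J}) (t0 : R) (a : J) (q : nat) :
  (forall j, 0 < p j) -> (forall j, 0 < w j) ->
  J' != set0 ->
  0 <= t0 -> t0 <= Ttot p - \sum_(j in J') p j ->
  is_alpha p w J' t0 a ->
  (1 <= q)%N -> (q < size (cpoints p w J' t0 a))%N ->
  let s := t0 + \sum_(j in Jleft p w J' t0 a q) p j in
  cpt p w J' t0 a q <= s -> s < cpt p w J' t0 a q.+1 ->
  ~ banned p w a s ->
  exists sch : seq J,
    partial_potential p w J' t0 sch /\
    (forall j, j \in Jleft p w J' t0 a q -> (index j sch < index a sch)%N) /\
    start p t0 sch a = s /\
    (forall j, j \in Jright p w J' t0 a q -> (index a sch < index j sch)%N).
Proof.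
move=> hp hw; exact: (main_aux hp hw).
Qed.
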